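(* For any real numbers $0<\gamma\le L$ and any integer $n\ge 1$, there exist a domain $\mathcal{X}\times\mathcal{Y}$, a distribution $P$ supported on a set $\mathcal{Z}\subset\mathcal{X}\times\mathcal{Y}$, a loss function $\ell:\mathcal{Y}\times\mathcal{Y}\to[0,L]$ (i.e. non-negative and $L$-bounded), and a uniformly $\gamma$-stable learning algorithm $\mathcal{A}:\mathcal{Z}^n\to\mathcal{Y}^{\mathcal{X}}$, such that if $\mathcal{S}$ is a training set of $n$ i.i.d. samples from $P$, then with probability at least $3/64$ over the draw of $\mathcal{S}$, \[ R_{\rm pop}(\mathcal{A}_\mathcal{S})-R_{\rm emp}(\mathcal{A}_\mathcal{S})\ge \frac{\gamma}{4}+\frac{L}{32\sqrt{n}}. \]
   Context: A learning algorithm $\mathcal{A}$ is a (deterministic) map sending a training set $\mathcal{S}=\{(x_1,y_1),\ldots,(x_n,y_n)\}$ to a function $\mathcal{A}_\mathcal{S}:\mathcal{X}\to\mathcal{Y}$. For a non-negative loss $\ell:\mathcal{Y}\times\mathcal{Y}\to\mathbb{R}$ and data distribution $P$ on $\mathcal{X}\times\mathcal{Y}$, the population risk is $R_{\rm pop}(\mathcal{A}_\mathcal{S})=\mathbb{E}_{(x,y)\sim P}[\ell(\mathcal{A}_\mathcal{S}(x),y)]$ and the empirical risk is $R_{\rm emp}(\mathcal{A}_\mathcal{S})=\frac1n\sum_{i=1}^n \ell(\mathcal{A}_\mathcal{S}(x_i),y_i)$. The algorithm $\mathcal{A}$ is uniformly $\gamma$-stable if for every training set $\mathcal{S}=\{(x_1,y_1),\ldots,(x_n,y_n)\}$,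 every index $i$, every training set $\mathcal{S}^i$ obtained from $\mathcal{S}$ by replacing $(x_i,y_i)$ with an arbitrary $(x_i',y_i')$, and every $(x,y)\in\mathcal{X}\times\mathcal{Y}$, one has $|\ell(\mathcal{A}_\mathcal{S}(x),y)-\ell(\mathcal{A}_{\mathcal{S}^i}(x),y)|\le\gamma$. *)

(* Defs.v *)
From mathcomp Require Import all_boot all_order all_algebra.
From mathcomp Require Import reals.
Set Implicit Arguments. Unset Strict Implicit. Unset Printing Implicit Defensive.
Import Order.TTheory GRing.Theory Num.Theory.
Local Open Scope ring_scope.

Section Defs.
Variables (R : realType) (X Y : finType).

Definition trainset (n : nat) := {ffun 'I_n -> (X * Y)%type}.

Definition algorithm (n : nat) := trainset n -> X -> Y.

Definition is_distr (P : X * Y -> R) : Prop :=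
  (forall z, 0 <= P z) /\ \sum_(z : X * Y) P z = 1.

Definition pop_risk (P : X * Y -> R) (loss : Y -> Y -> R) (h : X -> Y) : R :=
  \sum_(z : X * Y) P z * loss (h z.1) z.2.

Definition emp_risk (n : nat) (loss : Y -> Y -> R) (h : X -> Y) (S : trainset n) : R :=
  n%:R^-1 * \sum_(i < n) loss (h (S i).1) (S i).2.

Definition replace_at (n : nat) (S : trainset n) (i : 'I_n) (z' : X * Y) : trainset n :=
  [ffun j => if j == i then z' else S j].

Definition uniformly_stable (n : nat) (gamma : R) (loss : Y -> Y -> R) (A : algorithm n) : Prop :=
  forall (S : trainset n) (i : 'I_n) (z' : X * Y) (x : X) (y : Y),
    `| loss (A S x) y - loss (A (replace_at S i z') x) y | <= gamma.

Definition prob_iid (n : nat) (P : X * Y -> R) (E : trainset n -> bool) : R :=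
  \sum_(S : trainset n | E S) \prod_(i < n) P (S i).
End Defs.

(* Main.v *)
Require Import Defs.
From mathcomp Require Import all_boot all_order all_algebra.
From mathcomp Require Import reals.
From mathcomp Require Import zify ring lra.
Import Order.TTheory GRing.Theory Num.Theory.
Set Implicit Arguments. Unset Strict Implicit. Unset Printing Implicit Defensive.


Lemma binrec m : 'C((m.+1).*2, m.+1) * m.+1 = 2 * (m.*2.+1) * 'C(m.*2, m).
Proof.
have h1 := mul_bin_diag (m.+1).*2 m.
have h2 := mul_bin_diag (m.*2.+1) m.
have h3 : 'C(m.*2.+1, m.+1) = 'C(m.*2.+1, m).
  have := @bin_sub (m.*2.+1) m.+1.
  rewrite (_ : m.*2.+1 - m.+1 = m); last by lia.
  by move=> ->; lia.
rewrite doubleS /= in h1 *. rewrite /= in h2. rewrite h3 in h2.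
nia.
Qed.

Lemma central m : 'C(m.*2, m)^2 * (3 * m + 1) <= 16^m.
Proof.
elim: m => [|m IH]; first by rewrite bin0.
have h := binrec m.
set c := 'C(m.*2, m) in h IH *.
set d := 'C((m.+1).*2, m.+1) in h *.
have key : (d ^ 2 * (3 * m.+1 + 1)) * (m.+1)^2 <= (16 * 16 ^ m) * (m.+1)^2.
  have -> : d ^ 2 * (3 * m.+1 + 1) * m.+1 ^ 2 = 4 * (m.*2.+1)^2 * (3 * m + 4) * c^2.
    have hs : (d * m.+1)^2 = (2 * (m.*2.+1) * c)^2 by rewrite h.
    rewrite !expnMn in hs. nia.
  have e2 : (m.*2.+1)^2 * (3 * m + 4) <= 4 * (m.+1)^2 * (3 * m + 1) by nia.
  nia.
rewrite leq_pmul2r in key; last by rewrite expn_gt0.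
by rewrite [16 ^ m.+1]expnS.
Qed.

Lemma binsym m : 'C(m.*2.+1, m.+1) = 'C(m.*2.+1, m).
Proof.
have := @bin_sub (m.*2.+1) m.+1.
rewrite (_ : m.*2.+1 - m.+1 = m); last by lia.
by move=> ->; lia.
Qed.

Lemma central2 n : 'C(n, n./2)^2 * (3 * n + 2) <= 2 * 4^n.
Proof.
rewrite -[n in 'C(n, _)](odd_double_half n) -[n in 3 * n](odd_double_half n)
  -[n in 4 ^ n](odd_double_half n).
set m := n./2. case: (odd n); rewrite ?add1n ?add0n.
- have h := central m.+1.
  have e : 'C(m.+1.*2, m.+1) = 2 * 'C(m.*2.+1, m).
    by rewrite doubleS binS binsym; lia.
  rewrite e in h.
  have -> : 4 ^ (m.*2.+1) = 4 * 16 ^ m.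
    by rewrite expnS -mul2n expnM.
  rewrite [16 ^ m.+1]expnS in h.
  set c := 'C(m.*2.+1, m) in h *. rewrite -!mul2n in h *. nia.
- have h := central m.
  have -> : 4 ^ (m.*2) = 16 ^ m by rewrite -mul2n expnM.
  set c := 'C(m.*2, m) in h *. rewrite -!mul2n in h *. nia.
Qed.

Lemma binmono n k j : j <= n./2 -> k <= j -> 'C(n, k) <= 'C(n, j).
Proof.
elim: j => [|j IH] hj hk; first by rewrite leqn0 in hk; rewrite (eqP hk).
rewrite leq_eqVlt in hk; case/orP: hk => [/eqP -> //|hk].
apply: leq_trans (IH _ hk) _; first by lia.
have h := mul_bin_left n j.
have h2 : j.+1 <= n - j.
  have := odd_double_half n; lia.
nia.
Qed.

Lemma binmax n k : 'C(n, k) <= 'C(n, n./2).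
Proof.
case: (leqP k n./2) => hk; first exact: binmono.
case: (leqP k n) => hn; last by rewrite bin_small.
rewrite -bin_sub //.
apply: binmono => //.
have := odd_double_half n; lia.
Qed.

Lemma sumbin n : \sum_(k < n.+1) 'C(n, k) = 2 ^ n.
Proof.
have := expnDn 1 1 n; rewrite (_ : 1 + 1 = 2) // => ->.
by apply: eq_bigr => i _; rewrite !exp1n !muln1.
Qed.

Lemma cardP n r :
  #|[pred k : 'I_n.+1 | (2 * k < n) && (n <= 2 * k + r)]| <= r.
Proof.
pose g := fun j : 'I_r => (inord ((n - 1 - j)./2) : 'I_n.+1).
apply: (@leq_trans #|g @: setT|); last by rewrite (leq_trans (leq_imset_card _ _)) // cardsT card_ord.
apply/subset_leq_card/subsetP => k; rewrite inE => /andP [h1 h2].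
apply/imsetP.
have hj : n - 1 - 2 * k < r by lia.
exists (Ordinal hj); first by [].
apply: val_inj; rewrite /g /= inordK.
  rewrite (_ : n - 1 - (n - 1 - 2 * k) = k.*2); last by rewrite -mul2n; lia.
  by rewrite doubleK.
rewrite (_ : n - 1 - (n - 1 - 2 * k) = k.*2); last by rewrite -mul2n; lia.
by rewrite doubleK; have := ltn_ord k.
Qed.

Lemma anticonc n r : 0 < n -> 64 * r ^ 2 <= n ->
  3 * 2 ^ n <= 64 * \sum_(k < n.+1 | 2 * k + r + 1 <= n) 'C(n, k).
Proof.
move=> n0 hr.
set M := 'C(n, n./2).
set E := \sum_(k < n.+1 | 2 * k + r + 1 <= n) 'C(n, k).
set H := \sum_(k < n.+1 | 2 * k < n) 'C(n, k).
have hG : \sum_(k < n.+1 | n < 2 * k) 'C(n, k) = H.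
  rewrite (reindex_inj rev_ord_inj) /=.
  apply: eq_big => k /=.
    have := ltn_ord k; lia.
  move=> _; rewrite bin_sub //; have := ltn_ord k; lia.
have hZ : \sum_(k < n.+1 | 2 * k == n) 'C(n, k) <= M.
  apply: (@leq_trans (\sum_(k < n.+1 | k == inord (n./2)) 'C(n, k))).
    rewrite big_mkcond [X in _ <= X]big_mkcond /=.
    apply: leq_sum => k _; case: ifP => h; last by [].
    rewrite ifT //; apply/eqP/val_inj; rewrite /= inordK.
      have := odd_double_half n; move/eqP: h; lia.
    have := odd_double_half n; lia.
  rewrite big_pred1_eq inordK //; have := odd_double_half n; lia.
have hT : 2 ^ n <= 2 * H + M.
  rewrite -sumbin (bigID (fun k : 'I_n.+1 => 2 * k < n)) /= -/H.
  rewrite [X in _ + X](bigID (fun k : 'I_n.+1 => n < 2 * k)) /=.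
  have e1 : \sum_(i < n.+1 | ~~ (2 * i < n) && (n < 2 * i)) 'C(n, i) = H.
    rewrite -hG; apply: eq_bigl => k; lia.
  have e2 : \sum_(i < n.+1 | ~~ (2 * i < n) && ~~ (n < 2 * i)) 'C(n, i)
      = \sum_(k < n.+1 | 2 * k == n) 'C(n, k).
    apply: eq_bigl => k; lia.
  rewrite e1 e2; lia.
have hE : H <= E + r * M.
  rewrite /H (bigID (fun k : 'I_n.+1 => 2 * k + r + 1 <= n)) /=.
  apply: leq_add.
    rewrite /E big_mkcond [X in _ <= X]big_mkcond /=.
    apply: leq_sum => k _; case: ifP => // /andP[_ h]; rewrite ifT //.
  apply: (@leq_trans (\sum_(k < n.+1 | (2 * k < n) && (n <= 2 * k + r)) M)).
    rewrite big_mkcond [X in _ <= X]big_mkcond /=.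
    apply: leq_sum => k _; case: ifP => h; last by [].
    rewrite ifT; [exact: binmax | lia].
  rewrite sum_nat_const leq_mul2r; apply/orP; right.
  exact: (cardP n r).
have hM : 32 * ((2 * r + 1) * M) <= 29 * 2 ^ n.
  rewrite -leq_sqr.
  have c2 := central2 n; rewrite -/M in c2.
  have hr2 : 2048 * (2 * r + 1) ^ 2 <= 841 * (3 * n + 2) by nia.
  have : (32 * ((2 * r + 1) * M)) ^ 2 * (3 * n + 2) <= (29 * 2 ^ n) ^ 2 * (3 * n + 2).
    have e4 : (2 ^ n) ^ 2 = 4 ^ n by rewrite -expnM mulnC expnM.
    rewrite !expnMn e4.
    nia.
  by rewrite leq_pmul2r; last lia.
nia.
Qed.

Lemma cardle n (A : {set 'I_n}) : #|A| < n.+1.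
Proof. by rewrite ltnS; apply: leq_trans (max_card A) _; rewrite card_ord. Qed.

Lemma count_sets n (G : nat -> bool) :
  \sum_(A : {set 'I_n} | G #|A|) 1 = \sum_(k < n.+1 | G k) 'C(n, k).
Proof.
rewrite (partition_big (fun A : {set 'I_n} => (inord #|A| : 'I_n.+1)) (fun k : 'I_n.+1 => G k)) /=; last first.
  move=> A hA; rewrite inordK //; exact: cardle.
apply: eq_bigr => k hk.
rewrite -[n in 'C(n, _)](card_ord n) -card_draws -sum1_card.
apply: eq_bigl => A; rewrite inE.
apply/idP/idP.
  case/andP => _ /eqP <-; rewrite inordK //; exact: cardle.
move/eqP => hA; rewrite hA hk /=; apply/eqP/val_inj; rewrite /= inordK //.
Qed.

Lemma count_train (X : finType) n (G : nat -> bool) :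
  \sum_(S : {ffun 'I_n -> X * bool} | G #|[set i | (S i).2]|) 1
    = #|X| ^ n * \sum_(k < n.+1 | G k) 'C(n, k).
Proof.
pose h := fun p : {ffun 'I_n -> X} * {set 'I_n} => [ffun i => (p.1 i, i \in p.2)].
pose h' := fun S : {ffun 'I_n -> X * bool} => ([ffun i => (S i).1], [set i | (S i).2]).
rewrite (reindex h); last first.
  exists h' => [p _ | S _].
    case: p => f A; rewrite /h /h' /=; congr pair.
      by apply/ffunP => i; rewrite !ffunE.
    by apply/setP => i; rewrite inE ffunE.
  by apply/ffunP => i; rewrite /h /h' !ffunE /= inE; case: (S i).
transitivity (\sum_(p : {ffun 'I_n -> X} * {set 'I_n} | true && G #|p.2|) 1).
  apply: eq_bigl => -[f A] /=; rewrite (_ : [set i | (h (f, A) i).2] = A) //; apply/setP => i; rewrite inE ffunE //.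
rewrite -(pair_big_dep (fun _ : {ffun 'I_n -> X} => true) (fun _ (A : {set 'I_n}) => G #|A|) (fun _ _ => 1%N)) /=.
rewrite sum_nat_const count_sets card_ffun card_ord.
by rewrite -[#|_|]/#|predT| cardT.
Qed.
Local Open Scope ring_scope.

Lemma final (R : realType) (N s K C r g L : R) : 0 < N -> 0 < s -> s * s = N ->
  0 <= K -> K <= N -> 0 <= C -> 2 * C + r + 1 <= N -> s * s <= (8 * (r + 1)) ^+ 2 ->
  0 < g -> g <= L -> 0 <= r ->
  g / 4 + L / (32 * s) <= (2 * N * (L + g / 2) - g * K) / (4 * N) - C * (L - g / 2) / N.
Proof.
move=> N0 s0 sN K0 KN C0 hC hs g0 gL r0.
have s8 : s <= 8 * (r + 1) by nra.
rewrite -subr_ge0.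
have -> : (2 * N * (L + g / 2) - g * K) / (4 * N) - C * (L - g / 2) / N - (g / 4 + L / (32 * s))
   = (16 * L * (N - 2 * C) + 8 * g * (2 * C - K) - L * s) / (32 * N).
  rewrite -sN; field; lra.
apply: divr_ge0; last lra.
nra.
Qed.

Lemma sqrt_ex (n : nat) : exists r : nat, (64 * r ^ 2 <= n < 64 * r.+1 ^ 2)%N.
Proof.
elim: n => [|n [r hr]]; first by exists 0%N.
case: (ltnP n.+1 (64 * r.+1 ^ 2)) => h.
  by exists r; lia.
by exists r.+1; lia.
Qed.

Theorem theorem2 (R : realType) (gamma L : R) (n : nat) :
  0 < gamma -> gamma <= L -> (1 <= n)%N ->
  exists (X Y : finType) (P : X * Y -> R) (loss : Y -> Y -> R) (A : algorithm X Y n),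
    is_distr P /\
    (forall y1 y2 : Y, 0 <= loss y1 y2 <= L) /\
    uniformly_stable gamma loss A /\
    prob_iid P (fun S : trainset X Y n =>
        gamma / 4 + L / (32 * Num.sqrt (n%:R)) <=
        pop_risk P loss (A S) - emp_risk loss (A S) S)
    >= 3 / 64.
Proof.
move=> g0 gL n1.
have [c cE] : exists c : R, c = ((4 * n)%:R)^-1 by eexists.
pose loss := fun p y : bool => (if y then L else gamma / 2) - (if p then gamma / 2 else 0).
pose A := fun (S : trainset 'I_(n.*2) bool n) (x : 'I_(n.*2)) => x \in [set (S i).1 | i : 'I_n].
have nR : (0 : R) < n%:R by rewrite ltr0n.
exists 'I_(n.*2), bool, (fun _ => c), loss, A.
split.
  split; first by move=> _; rewrite cE invr_ge0 ler0n.
  rewrite sumr_const card_prod card_ord card_bool -mulr_natr cE.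
  rewrite (_ : (n.*2 * 2)%N = (4 * n)%N); last by rewrite -mul2n; lia.
  by rewrite mulVf // pnatr_eq0; lia.
split.
  move=> p y; rewrite /loss; case: p; case: y; apply/andP; split; lra.
split.
  move=> S i z x y; rewrite /loss.
  case: (A S x); case: (A _ x); case: y; rewrite ler_norml; apply/andP; split; lra.
have [r hr] := sqrt_ex n.
have key : forall S : trainset 'I_(n.*2) bool n,
    (2 * #|[set i | (S i).2]| + r + 1 <= n)%N ->
    gamma / 4 + L / (32 * Num.sqrt (n%:R)) <=
        pop_risk (fun _ => c) loss (A S) - emp_risk loss (A S) S.
  move=> S hS.
  set T := [set (S i).1 | i : 'I_n].
  have hpop : pop_risk (fun _ => c) loss (A S)
      = (2 * n%:R * (L + gamma / 2) - gamma * #|T|%:R) / (4 * n%:R).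
    rewrite /pop_risk -(pair_bigA _ (fun x y => c * loss (A S x) y)) /=.
    under eq_bigr => x _ do rewrite big_bool /loss /=.
    transitivity (\sum_(x < n.*2) (c * (L + gamma / 2) - (if x \in T then c * gamma else 0))).
      by apply: eq_bigr => x _; rewrite /A; case: (x \in T); field.
    rewrite sumrB sumr_const card_ord -big_mkcond /= sumr_const.
    move: #|T| => K. rewrite -[_ *+ n.*2]mulr_natr -[_ *+ K]mulr_natr cE (_ : (n.*2)%:R = 2 * n%:R :> R); last by rewrite -mul2n natrM.
    rewrite natrM. field. rewrite pnatr_eq0; lia.

  have hA : forall i, A S (S i).1 by move=> i; rewrite /A; apply/imsetP; exists i.
  have hemp : emp_risk loss (A S) S = #|[set i | (S i).2]|%:R * (L - gamma / 2) / n%:R.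
    rewrite /emp_risk.
    under eq_bigr => i _ do rewrite hA /loss.
    transitivity (n%:R^-1 * \sum_(i < n) (if (S i).2 then L - gamma / 2 else 0)).
      by congr (_ * _); apply: eq_bigr => i _; case: (S i).2; field.
    rewrite -big_mkcond /=.
    rewrite (eq_bigl (fun i => i \in [set i | (S i).2])); last by move=> i; rewrite inE.
    rewrite sumr_const; move: #|_| => C; rewrite -mulr_natr; field; rewrite pnatr_eq0; lia.
  have hK : (#|T| <= n)%N.
    apply: leq_trans (leq_imset_card _ _) _; rewrite card_ord //.
  have hS' : 2 * (#|[set i | (S i).2]|%:R : R) + r%:R + 1 <= n%:R.
    move: hS; rewrite -(ler_nat R) !natrD; lra.
  have hr' : (n%:R : R) <= 64 * (r%:R + 1) ^+ 2.
    have : (n <= 64 * r.+1 ^ 2)%N by lia.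
    rewrite -(ler_nat R) natrM natrX -[r.+1]addn1 natrD; lra.
  rewrite hpop hemp; apply: (final (r := r%:R)) => //.
  - by rewrite sqrtr_gt0.
  - by rewrite -expr2 sqr_sqrtr // ler0n.
  - by rewrite ler_nat.
  - by rewrite -expr2 sqr_sqrtr ?ler0n //; nra.
rewrite /prob_iid.
under eq_bigr => S _ do rewrite -(big_mkord xpredT (fun _ => c)) prodr_const_nat subn0.
have c0 : 0 <= c by rewrite cE invr_ge0 ler0n.
apply: (@le_trans _ _ (\sum_(S : trainset 'I_(n.*2) bool n | (2 * #|[set i | (S i).2]| + r + 1 <= n)%N) c ^+ n)); last first.
  rewrite [X in _ <= X]big_mkcond [X in X <= _]big_mkcond /=; apply: ler_sum => S _.
  case: ifP => h; first by rewrite ifT //; apply: key.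
  by case: ifP => _ //; apply: exprn_ge0.
have e : \sum_(S : trainset 'I_(n.*2) bool n | (2 * #|[set i | (S i).2]| + r + 1 <= n)%N) c ^+ n
   = (\sum_(S : {ffun 'I_n -> 'I_(n.*2) * bool} | (2 * #|[set i | (S i).2]| + r + 1 <= n)%N) 1%N)%:R * c ^+ n.
  by rewrite natr_sum mulr_suml; apply: eq_bigr => S _; rewrite mul1r.
rewrite e (count_train 'I_(n.*2) n (fun k => (2 * k + r + 1 <= n)%N)) card_ord.
have ha := anticonc n1 (proj1 (andP hr)).
move: (\sum_(k < n.+1 | _) 'C(n, k))%N ha => sg ha.
have h2 : (n.*2)%:R * c = 2^-1 :> R.
  rewrite cE -mul2n natrM natrM; field; rewrite pnatr_eq0; lia.
rewrite natrM natrX mulrAC -exprMn h2 exprVn.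
have t0 : (0 : R) < 2 ^+ n by apply: exprn_gt0.
move: ha; rewrite -(ler_nat R) !natrM natrX => ha.
have h3 : 3 / 64 <= sg%:R / (2 ^+ n) :> R by rewrite ler_pdivlMr //; lra.
by rewrite [X in _ <= X]mulrC.
Qed.
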